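(* Let $d\ge3$. Suppose that $\det H(X,Y)\ne0$ for every generic pair $(X,Y)$ of matrices in $M_d(\mathbb{C})$. Then $H(X,Y)$ is positive semidefinite for all $X,Y\in M_d(\mathbb{C})$. Here $H(X,Y)$ is the hermitian matrix of order $2d^2$ given by $H=H_1-\tfrac12(H_2+H_3)+\tfrac14H_4$ with $$H_1=\begin{bmatrix}\|X\|^2&\operatorname{tr}(X^\dagger Y)\\ \operatorname{tr}(Y^\dagger X)&\|Y\|^2\end{bmatrix}\otimes I_{d^2},\qquad H_2=\begin{bmatrix}X^\dagger X&X^\dagger Y\\ Y^\dagger X&Y^\dagger Y\end{bmatrix}\otimes I_d,$$ $$H_3=\begin{bmatrix}I_d\otimes X^*X^T&I_d\otimes X^*Y^T\\ I_d\otimes Y^*X^T&I_d\otimes Y^*Y^T\end{bmatrix},\qquad H_4=\begin{bmatrix}\tilde X^*\tilde X^T&\tilde X^*\tilde Y^T\\ \tilde Y^*\tilde X^T&\tilde Y^*\tilde Y^T\end{bmatrix}.$$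
   Context: A pair $(X,Y)$ of matrices in $M_d(\mathbb{C})$ is generic if $X$ and $Y$ are linearly independent and some linear combination of $X$ and $Y$ is nonsingular. $Z^*$ is the entrywise complex conjugate, $Z^T$ the transpose, $Z^\dagger$ the conjugate transpose, $\|Z\|^2=\operatorname{tr}(Z^\dagger Z)$, $I_m$ the identity matrix of order $m$, and $A\otimes B=[a_{ij}B]$ for $A=[a_{ij}]$. For a matrix $Z$, $\tilde Z$ is the column vector obtained by stacking the columns of $Z$ one below the other, starting with the first. *)

(* Defs.v *)
From HB Require Import structures.
From mathcomp Require Import all_boot all_order all_algebra.
From mathcomp Require Import reals.
From mathcomp Require Export complex.
Set Implicit Arguments.
Unset Strict Implicit.
Unset Printing Implicit Defensive.
Import Order.TTheory GRing.Theory Num.Theory.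
Local Open Scope ring_scope.

Lemma ord_div_proof m p (i : 'I_(m * p)) : (i %/ p < m)%N.
Proof.
move: i; case: p => [|p] i; first by case: i => k; rewrite muln0.
by rewrite ltn_divLR // ltn_ord.
Qed.
Lemma ord_mod_proof m p (i : 'I_(m * p)) : (i %% p < p)%N.
Proof.
move: i; case: p => [|p] i; last by rewrite ltn_mod.
by case: i => k; rewrite muln0.
Qed.
Definition ord_div m p (i : 'I_(m * p)) : 'I_m := Ordinal (ord_div_proof i).
Definition ord_mod m p (i : 'I_(m * p)) : 'I_p := Ordinal (ord_mod_proof i).

Definition kron (C : pzRingType) m n p q (A : 'M[C]_(m, n)) (B : 'M[C]_(p, q))
  : 'M[C]_(m * p, n * q) :=
  \matrix_(i, j) (A (ord_div i) (ord_div j) * B (ord_mod i) (ord_mod j)).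

Section Defs.
Variable R : realType.
Local Notation C := (R[i]).

Definition cconj m n (Z : 'M[C]_(m, n)) : 'M[C]_(m, n) := map_mx Num.conj Z.
Definition adj m n (Z : 'M[C]_(m, n)) : 'M[C]_(n, m) := (cconj Z)^T.
Definition fnorm2 d (Z : 'M[C]_d) : C := \tr (adj Z *m Z).
(* column stacking: entry k = j*d + i is Z i j *)
Definition vecc d (Z : 'M[C]_d) : 'cV[C]_(d * d) :=
  \col_(k < d * d) Z (ord_mod k) (ord_div k).

Definition generic d (X Y : 'M[C]_d) : Prop :=
  (forall a b : C, a *: X + b *: Y = 0 -> a = 0 /\ b = 0) /\
  (exists a b : C, \det (a *: X + b *: Y) != 0).

Definition psd n (M : 'M[C]_n) : Prop :=
  forall v : 'cV[C]_n, 0 <= (adj v *m M *m v) 0 0.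

Lemma size_eq1 d : (2 * (d * d) = d * d + d * d)%N.
Proof. by rewrite mul2n -addnn. Qed.
Lemma size_eq2 d : ((d + d) * d = d * d + d * d)%N.
Proof. by rewrite mulnDl. Qed.

Definition H1 d (X Y : 'M[C]_d) : 'M[C]_(d * d + d * d) :=
  castmx (size_eq1 d, size_eq1 d)
    (kron (\matrix_(i < 2, j < 2)
             nth 0 (nth [::] [:: [:: fnorm2 X; \tr (adj X *m Y)];
                                 [:: \tr (adj Y *m X); fnorm2 Y]] i) j)
          (1%:M : 'M[C]_(d * d))).

Definition H2 d (X Y : 'M[C]_d) : 'M[C]_(d * d + d * d) :=
  castmx (size_eq2 d, size_eq2 d)
    (kron (block_mx (adj X *m X) (adj X *m Y) (adj Y *m X) (adj Y *m Y))
          (1%:M : 'M[C]_d)).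

Definition H3 d (X Y : 'M[C]_d) : 'M[C]_(d * d + d * d) :=
  block_mx (kron (1%:M : 'M[C]_d) (cconj X *m X^T))
           (kron (1%:M : 'M[C]_d) (cconj X *m Y^T))
           (kron (1%:M : 'M[C]_d) (cconj Y *m X^T))
           (kron (1%:M : 'M[C]_d) (cconj Y *m Y^T)).

Definition H4 d (X Y : 'M[C]_d) : 'M[C]_(d * d + d * d) :=
  block_mx (cconj (vecc X) *m (vecc X)^T) (cconj (vecc X) *m (vecc Y)^T)
           (cconj (vecc Y) *m (vecc X)^T) (cconj (vecc Y) *m (vecc Y)^T).

Definition Hmat d (X Y : 'M[C]_d) : 'M[C]_(d * d + d * d) :=
  H1 X Y - 2^-1 *: (H2 X Y + H3 X Y) + 4^-1 *: H4 X Y.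

End Defs.

(* Main.v *)
Require Import Defs.
From HB Require Import structures.
From mathcomp Require Import all_boot all_order all_algebra.
From mathcomp Require Import classical_sets reals complex.
From mathcomp Require Import ring lra.
From Stdlib Require Import ClassicalEpsilon Classical.
Import Order.TTheory GRing.Theory Num.Theory.
Set Implicit Arguments.
Unset Strict Implicit.
Unset Printing Implicit Defensive.
Local Open Scope ring_scope.

Section Norms.
Variable R : realType.
Local Notation C := (R[i]).
Local Open Scope complex_scope.

Definition nc (x : C) : R := Normc.normc x.

Lemma nc_ge0 x : 0 <= nc x.
Proof. by case: x => a b; rewrite /nc /= sqrtr_ge0. Qed.

Lemma ncE x : `|x| = (nc x)%:C.
Proof. by case: x. Qed.

Lemma nc0 : nc 0 = 0.
Proof. exact: Normc.normc0. Qed.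

Lemma ncM x y : nc (x * y) = nc x * nc y.
Proof. exact: Normc.normcM. Qed.

Lemma ncD x y : nc (x + y) <= nc x + nc y.
Proof. by have := ler_normD x y; rewrite !ncE -rmorphD lecR. Qed.

Lemma ncN x : nc (- x) = nc x.
Proof. by case: x => a b; rewrite /nc /= !sqrrN. Qed.

Lemma ncB x y : nc (x - y) = nc (y - x).
Proof. by rewrite -opprB ncN. Qed.

Lemma ncJ x : nc (Num.conj x) = nc x.
Proof. by case: x => a b; rewrite /nc /= sqrrN. Qed.

Lemma nc_eq0 x : (nc x == 0) = (x == 0).
Proof.
apply/eqP/eqP => [/Normc.eq0_normc //|->]; exact: nc0.
Qed.

Lemma ncR (r : R) : nc r%:C = `|r|.
Proof. by rewrite /nc /= expr0n /= addr0 sqrtr_sqr. Qed.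

Lemma nc_sqr x : x * Num.conj x = ((nc x) ^+ 2)%:C.
Proof.
case: x => a b; rewrite /nc /= sqr_sqrtr ?addr_ge0 ?sqr_ge0 //.
by simpc; rewrite -!expr2 [b * a]mulrC addNr.
Qed.

Lemma nc_Re x : `|complex.Re x| <= nc x.
Proof.
case: x => a b; rewrite /nc /=.
rewrite -(sqrtr_sqr a) ler_sqrt ?addr_ge0 ?sqr_ge0 // lerDl sqr_ge0 //.
Qed.

Lemma Re_ge_nc x : - nc x <= complex.Re x.
Proof. by have := nc_Re x; rewrite ler_norml => /andP[]. Qed.

Lemma ReD (x y : C) : complex.Re (x + y) = complex.Re x + complex.Re y.
Proof. by case: x; case: y. Qed.

End Norms.

Section QF.
Variable R : realType.
Local Notation C := (R[i]).
Local Open Scope complex_scope.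

Lemma ReR (r : R) : complex.Re (r%:C) = r. Proof. by []. Qed.
Lemma ReN (x : C) : complex.Re (- x) = - complex.Re x. Proof. by case: x. Qed.
Lemma ReRM (r : R) (x : C) : complex.Re (r%:C * x) = r * complex.Re x.
Proof. by case: x => a b /=; rewrite mul0r subr0. Qed.
Lemma ImR (r : R) : complex.Im (r%:C) = 0. Proof. by []. Qed.

Lemma conjR (r : R) : Num.conj (r%:C) = r%:C.
Proof. exact: conjc_real. Qed.

Lemma conjRM (r : R) (z : C) : Num.conj (r%:C * z) = r%:C * Num.conj z.
Proof.
case: z => a b; apply/eqP; rewrite eq_complex /=.
by apply/andP; split; apply/eqP; ring.
Qed.

Lemma conjNRM (r : R) (z : C) : Num.conj (- (r%:C * z)) = - (r%:C * Num.conj z).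
Proof.
case: z => a b; apply/eqP; rewrite eq_complex /=.
by apply/andP; split; apply/eqP; ring.
Qed.

Lemma conj_Im0 (x : C) : Num.conj x = x -> complex.Im x = 0.
Proof.
case: x => a b; rewrite /= => -[h]; apply/eqP.
have : b *+ 2 == 0 by rewrite mulr2n -{1}h addNr.
by rewrite mulrn_eq0.
Qed.

Lemma ge0_Re (x : C) : complex.Im x = 0 -> (0 <= x) = (0 <= complex.Re x).
Proof. by move=> hx; rewrite lecE hx /= eqxx. Qed.

Variable n : nat.
Implicit Types (H : 'M[C]_n) (u v w : 'cV[C]_n).

Definition bf H u w : C := (adj u *m H *m w) 0 0.
Definition qf H v : C := bf H v v.
Definition herm H := adj H = H.

Lemma dgE m p (A : 'M[C]_(m, p)) i j : adj A i j = Num.conj (A j i).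
Proof. by rewrite !mxE. Qed.

Lemma dgD m p (A B : 'M[C]_(m, p)) : adj (A + B) = adj A + adj B.
Proof. by apply/matrixP => i j; rewrite !mxE rmorphD. Qed.

Lemma dgZ m p (a : C) (A : 'M[C]_(m, p)) : adj (a *: A) = Num.conj a *: adj A.
Proof. by apply/matrixP => i j; rewrite !mxE rmorphM. Qed.

Lemma dgM m p q (A : 'M[C]_(m, p)) (B : 'M[C]_(p, q)) :
  adj (A *m B) = adj B *m adj A.
Proof.
apply/matrixP => i j; rewrite !mxE rmorph_sum; apply: eq_bigr => k _.
by rewrite !mxE rmorphM mulrC.
Qed.

Lemma dgK m p (A : 'M[C]_(m, p)) : adj (adj A) = A.
Proof. by apply/matrixP => i j; rewrite !mxE conjCK. Qed.

Lemma bfDl H u1 u2 w : bf H (u1 + u2) w = bf H u1 w + bf H u2 w.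
Proof. by rewrite /bf dgD !mulmxDl mxE. Qed.
Lemma bfDr H u w1 w2 : bf H u (w1 + w2) = bf H u w1 + bf H u w2.
Proof. by rewrite /bf mulmxDr mxE. Qed.
Lemma bfZl H a u w : bf H (a *: u) w = Num.conj a * bf H u w.
Proof. by rewrite /bf dgZ -!scalemxAl mxE. Qed.
Lemma bfZr H a u w : bf H u (a *: w) = a * bf H u w.
Proof. by rewrite /bf -scalemxAr mxE. Qed.

Lemma bf_conj H u w : Num.conj (bf H u w) = bf (adj H) w u.
Proof.
rewrite /bf; have -> : Num.conj ((adj u *m H *m w) 0 0) = adj (adj u *m H *m w) 0 0.
  by rewrite !mxE.
by rewrite !dgM dgK mulmxA.
Qed.

Lemma herm_bf H u w : herm H -> bf H w u = Num.conj (bf H u w).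
Proof. by move=> hH; rewrite bf_conj hH. Qed.

Lemma herm_qf_Im H v : herm H -> complex.Im (qf H v) = 0.
Proof. by move=> hH; apply: conj_Im0; rewrite /qf -herm_bf. Qed.

Definition ev (i : 'I_n) : 'cV[C]_n := \col_k (k == i)%:R.

Lemma bf_ev H i v : bf H (ev i) v = (H *m v) i 0.
Proof.
rewrite /bf -mulmxA mxE (bigD1 i) //= big1 ?addr0.
  by rewrite !mxE eqxx rmorph1 mul1r.
by move=> k /negbTE kn; rewrite !mxE kn rmorph0 mul0r.
Qed.

Lemma qf_ev H i : qf H (ev i) = H i i.
Proof.
rewrite /qf bf_ev mxE (bigD1 i) //= big1 ?addr0; first by rewrite !mxE eqxx mulr1.
by move=> k /negbTE kn; rewrite !mxE kn mulr0.
Qed.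

Lemma psd_bound H v i : herm H -> psd H ->
  nc ((H *m v) i 0) ^+ 2 <= complex.Re (H i i) * complex.Re (qf H v).
Proof.
move=> hH pH.
set b := (H *m v) i 0; set a := qf H v; set c := H i i.
have hq : forall x : R, 0 <= complex.Re a - 2 * x * nc b ^+ 2
                           + x ^+ 2 * nc b ^+ 2 * complex.Re c.
  move=> x; set l : C := - (x%:C * b).
  have h0 : 0 <= qf H (v + l *: ev i) := pH _.
  move: h0; rewrite ge0_Re; last exact: herm_qf_Im.
  have -> : qf H (v + l *: ev i) = a + Num.conj l * b + l * Num.conj b
                   + Num.conj l * l * c.
    rewrite /qf !bfDl !bfDr !bfZl !bfZr.
    rewrite -[bf H (ev i) (ev i)]/(qf H (ev i)) qf_ev -/c.
    rewrite (herm_bf (ev i) v hH) bf_ev -/b.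
    by rewrite -/(qf H v) -/a; ring.
  have -> : Num.conj l * b = - (x * nc b ^+ 2)%:C.
    by rewrite /l conjNRM mulNr -mulrA [_ * b]mulrC nc_sqr -rmorphM.
  have -> : l * Num.conj b = - (x * nc b ^+ 2)%:C.
    by rewrite /l mulNr -mulrA nc_sqr -rmorphM.
  have -> : Num.conj l * l = (x ^+ 2 * nc b ^+ 2)%:C.
    rewrite /l conjNRM mulNr mulrN opprK.
    rewrite mulrACA [Num.conj b * b]mulrC nc_sqr -rmorphM.
    by rewrite [_ * x]mulrC -rmorphM expr2.
  rewrite !ReD !ReN !ReRM ReR.
  by move=> h; apply: le_trans h _; lra.
have c0 : 0 <= complex.Re c.
  have h0 : 0 <= qf H (ev i) := pH _.
  by move: h0; rewrite ge0_Re ?herm_qf_Im // qf_ev.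
have a0 : 0 <= complex.Re a.
  have h0 : 0 <= qf H v := pH _.
  by move: h0; rewrite ge0_Re ?herm_qf_Im.
set N := nc b ^+ 2; set ra := complex.Re a; set rc := complex.Re c.
have N0 : 0 <= N by rewrite /N sqr_ge0.
have [c00|cpos] := eqVneq rc 0.
  rewrite c00 mul0r.
  have [nb0|nbpos] := eqVneq N 0; first by rewrite nb0.
  set x := (ra + 1) / (2 * N).
  have e : 2 * x * N = ra + 1.
    by rewrite /x; field.
  by have := hq x; rewrite -/rc c00 mulr0 addr0 -/N -/ra e; lra.
have cp : 0 < rc by rewrite lt_def cpos c0.
have e1 : rc^-1 ^+ 2 * N * rc = rc^-1 * N by field.
have := hq rc^-1; rewrite -/N -/ra -/rc e1 => h.
have h2 : rc^-1 * N <= ra by lra.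
rewrite (_ : N = rc * (rc^-1 * N)); last by field.
by rewrite ler_pM2l.
Qed.
End QF.

Section LB.
Variable R : realType.
Local Notation C := (R[i]).
Local Open Scope complex_scope.
Variable n : nat.
Implicit Types (H : 'M[C]_n) (u v w : 'cV[C]_n).

Definition S1 v : R := \sum_i nc (v i 0).

Lemma S1_ge0 v : 0 <= S1 v.
Proof. by apply: sumr_ge0 => i _; exact: nc_ge0. Qed.

Lemma sum_sq_bound (F : 'I_n -> R) K : (forall i, 0 <= F i) ->
  (forall i, F i ^+ 2 <= K) -> (\sum_i F i) ^+ 2 <= K *+ n *+ n.
Proof.
move=> F0 FK; rewrite expr2 mulr_suml.
have -> : K *+ n *+ n = \sum_(i < n) \sum_(j < n) K by rewrite !sumr_const card_ord.
apply: ler_sum => i _; rewrite mulr_sumr; apply: ler_sum => j _.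
have := sqr_ge0 (F i - F j); have := FK i; have := FK j.
rewrite !expr2 => h1 h2 h3; nra.
Qed.

Lemma nc_sum (I : finType) (F : I -> C) : nc (\sum_i F i) <= \sum_i nc (F i).
Proof.
elim/big_rec2: _ => [|i y x _ h]; first by rewrite nc0.
by apply: le_trans (ncD _ _) _; rewrite lerD2l.
Qed.

Lemma nc_le_sum (I : finType) (F : I -> R) i : (forall j, 0 <= F j) -> F i <= \sum_j F j.
Proof.
move=> F0; rewrite (bigD1 i) //= lerDl; apply: sumr_ge0 => j _; exact: F0.
Qed.

Lemma mulmx_bound m (A : 'M[C]_(m, n)) u K i : (forall k, nc (A i k) <= K) ->
  nc ((A *m u) i 0) <= K * S1 u.
Proof.
move=> hK; rewrite mxE; apply: le_trans (nc_sum _) _.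
rewrite /S1 mulr_sumr; apply: ler_sum => k _; rewrite ncM.
by apply: ler_wpM2r; [exact: nc_ge0| exact: hK].
Qed.

Lemma lower_bound H : herm H -> psd H -> \det H != 0 ->
  exists2 c, 0 < c & forall v, c * S1 v ^+ 2 <= complex.Re (qf H v).
Proof.
move=> hH pH dH.
set M := 1 + \sum_i nc (H i i).
set Ma := 1 + \sum_i \sum_j nc (\adj H i j).
have M1 : 1 <= M by rewrite lerDl sumr_ge0 // => i _; exact: nc_ge0.
have Ma1 : 1 <= Ma by rewrite lerDl !sumr_ge0 // => i _; apply: sumr_ge0 => j _; exact: nc_ge0.
have hM : forall i, complex.Re (H i i) <= M.
  move=> i; apply: le_trans (ler_norm _) _; apply: le_trans (nc_Re _) _.
  apply: (le_trans _ (ler_wpDl ler01 (lexx _))).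
  by apply: (@nc_le_sum _ (fun k => nc (H k k)) i) => j; exact: nc_ge0.
have hMa : forall i j, nc (\adj H i j) <= Ma.
  move=> i j; apply: (le_trans _ (ler_wpDl ler01 (lexx _))).
  apply: le_trans (@nc_le_sum _ (fun i => \sum_j nc (\adj H i j)) i _).
    by apply: (@nc_le_sum _ (fun j => nc (\adj H i j)) j) => k; exact: nc_ge0.
  by move=> k; apply: sumr_ge0 => l _; exact: nc_ge0.
set nd := nc (\det H).
set K := (n%:R * Ma) ^+ 2 * (M *+ n *+ n).
have K0 : 0 <= K.
  by rewrite /K mulr_ge0 ?sqr_ge0 // !mulrn_wge0 // (le_trans ler01 M1).
exists (nd ^+ 2 / (K + 1)).
  rewrite divr_gt0 //; last by rewrite ltr_wpDl.
  by rewrite exprn_gt0 // lt_def nc_eq0 dH nc_ge0.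
move=> v.
set a := complex.Re (qf H v).
have a0 : 0 <= a.
  have h0 : 0 <= qf H v := pH _.
  by move: h0; rewrite ge0_Re ?herm_qf_Im.
set u := H *m v.
have hu : forall i, nc (u i 0) ^+ 2 <= M * a.
  move=> i; apply: le_trans (psd_bound v i hH pH) _.
  by apply: ler_wpM2r.
have Su : S1 u ^+ 2 <= (M * a) *+ n *+ n.
  by apply: sum_sq_bound => // i; exact: nc_ge0.
have eu : \adj H *m u = \det H *: v.
  by rewrite /u mulmxA mul_adj_mx mul_scalar_mx.
have Sv : nd * S1 v <= n%:R * Ma * S1 u.
  rewrite /S1 mulr_sumr.
  have -> : n%:R * Ma * S1 u = \sum_(i < n) (Ma * S1 u).
    by rewrite sumr_const card_ord -mulrA mulr_natl.
  apply: ler_sum => i _; rewrite -ncM.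
  have -> : \det H * v i 0 = (\adj H *m u) i 0 by rewrite eu mxE.
  by apply: mulmx_bound => k; exact: hMa.
have nd0 : 0 <= nd by exact: nc_ge0.
have Sv2 : (nd * S1 v) ^+ 2 <= (n%:R * Ma) ^+ 2 * ((M * a) *+ n *+ n).
  apply: (@le_trans _ _ ((n%:R * Ma * S1 u) ^+ 2)).
    by rewrite !expr2; apply: ler_pM => //; rewrite mulr_ge0 // S1_ge0.
  by rewrite exprMn ler_wpM2l // ?sqr_ge0.
have eK : (n%:R * Ma) ^+ 2 * ((M * a) *+ n *+ n) = K * a.
  by rewrite /K -!mulrnAl !mulrA.
rewrite eK exprMn in Sv2.
rewrite mulrAC ler_pdivrMr ?ltr_wpDl //.
apply: le_trans Sv2 _.
by rewrite mulrDr mulr1 mulrC lerDl.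
Qed.
End LB.

Section Path.
Variable R : realType.
Local Notation C := (R[i]).
Local Open Scope complex_scope.
Variable n : nat.
Implicit Types (H : 'M[C]_n) (u v w : 'cV[C]_n).

Lemma qf_sub H H' v : qf H' v = qf H v + qf (H' - H) v.
Proof.
have e : forall A B : 'M[C]_(1,1), (A - B) 0 0 = A 0 0 - B 0 0 by move=> *; rewrite !mxE.
by rewrite /qf /bf mulmxBr mulmxBl e addrC subrK.
Qed.

Lemma qf_small (E : 'M[C]_n) v e : (forall i j, nc (E i j) <= e) -> nc (qf E v) <= e * S1 v ^+ 2.
Proof.
move=> hE; set T := e * S1 v.
have -> : e * S1 v ^+ 2 = S1 v * T by rewrite /T expr2 mulrCA.
rewrite {1}/S1 mulr_suml /qf /bf -mulmxA mxE; apply: le_trans (nc_sum _) _.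
apply: ler_sum => i _; rewrite ncM dgE ncJ; apply: ler_wpM2l; first exact: nc_ge0.
by apply: mulmx_bound.
Qed.

Lemma qf_perturb H H' v e : (forall i j, nc (H' i j - H i j) <= e) ->
  complex.Re (qf H v) - e * S1 v ^+ 2 <= complex.Re (qf H' v).
Proof.
move=> hE; rewrite (qf_sub H H') ReD lerD2l.
apply: le_trans (Re_ge_nc _); rewrite lerN2.
by apply: qf_small => i j; rewrite !mxE.
Qed.

Lemma herm_psd H : herm H -> (forall v, 0 <= complex.Re (qf H v)) -> psd H.
Proof.
move=> hH h v; have -> : (adj v *m H *m v) 0 0 = qf H v by [].
by rewrite ge0_Re ?herm_qf_Im.
Qed.

Lemma psd_Re H v : herm H -> psd H -> 0 <= complex.Re (qf H v).
Proof.
move=> hH pH; have h0 : 0 <= qf H v := pH v.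
by move: h0; rewrite ge0_Re ?herm_qf_Im.
Qed.

Variable Hf : R -> 'M[C]_n.
Hypothesis hh : forall t, herm (Hf t).
Variable L : R.
Hypothesis L0 : 0 <= L.
Hypothesis hL : forall s t i j, 0 <= s <= 1 -> 0 <= t <= 1 ->
  nc (Hf s i j - Hf t i j) <= L * `|s - t|.
Hypothesis h0 : psd (Hf 0).
Hypothesis hd : forall t, 0 <= t < 1 -> \det (Hf t) != 0.

Lemma open_step t0 : 0 <= t0 < 1 -> psd (Hf t0) ->
  exists2 h, 0 < h & forall s, 0 <= s <= 1 -> `|s - t0| <= h -> psd (Hf s).
Proof.
move=> ht pt; have [c c0 hc] := lower_bound (hh t0) pt (hd ht).
exists (c / (L + 1)); first by rewrite divr_gt0 // ltr_wpDl.
move=> s hs hst; apply: herm_psd => // v.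
have ht' : 0 <= t0 <= 1 by move: ht => /andP[a b]; rewrite a ltW.
have hE : forall i j, nc (Hf s i j - Hf t0 i j) <= c.
  move=> i j; apply: le_trans (hL i j hs ht') _.
  apply: (@le_trans _ _ (L * (c / (L + 1)))); first by rewrite ler_wpM2l.
  rewrite mulrA ler_pdivrMr ?ltr_wpDl // mulrDr mulr1 mulrC lerDl.
  exact: ltW.
have := qf_perturb v hE; have := hc v; lra.
Qed.

Lemma closed_step t0 : 0 <= t0 <= 1 ->
  (forall e, 0 < e -> exists2 s, 0 <= s <= 1 /\ `|s - t0| <= e & psd (Hf s)) ->
  psd (Hf t0).
Proof.
move=> ht hc; apply: herm_psd => // v.
rewrite leNgt; apply/negP => neg.
set a := complex.Re (qf (Hf t0) v) in neg.
set q := S1 v ^+ 2.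
have q0 : 0 <= q by rewrite /q sqr_ge0.
set K := (L + 1) * (q + 1).
have K0 : 0 < K by rewrite mulr_gt0 // ltr_wpDl.
have na : 0 < - a by rewrite oppr_gt0.
set e := - a / K.
have [s [hs hst] ps] := hc e (divr_gt0 na K0).
have hE : forall i j, nc (Hf t0 i j - Hf s i j) <= L * e.
  move=> i j; apply: le_trans (hL i j ht hs) _.
  by rewrite ler_wpM2l // distrC.
have h1 := qf_perturb v hE.
have h2 := psd_Re v (hh s) ps.
rewrite -/q in h1.
have qK : L * q < K.
  have -> : K = L * q + L + q + 1 by rewrite /K; ring.
  by rewrite -!addrA ltrDl (ltr_wpDl L0 (ltr_wpDl q0 ltr01)).
have : L * e * q < - a.
  have -> : L * e * q = - a * (L * q / K) by rewrite /e; ring.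
  rewrite -[X in _ < X]mulr1 ltr_pM2l // ltr_pdivrMr // mul1r //.
have : complex.Re (qf (Hf t0) v) = a by [].
clearbody e K q a; lra.
Qed.
Lemma path_psd t : 0 <= t <= 1 -> psd (Hf t).
Proof.
pose A : set R := fun t => 0 <= t <= 1 /\ forall s, 0 <= s <= t -> psd (Hf s).
have A0 : A 0.
  split; first by rewrite lexx ler01.
  by move=> s /andP[a b]; have -> : s = 0 by apply/eqP; rewrite eq_le a b.
have hs : has_sup A.
  split; first by exists 0.
  by exists 1 => x [/andP[_ ->]].
set ts := sup A.
have ub : forall x, A x -> x <= ts by move=> x Ax; exact: sup_upper_bound hs _ Ax.
have ts0 : 0 <= ts by exact: ub.
have ts1 : ts <= 1.
  rewrite leNgt; apply/negP => h.
  have e1 : 0 < ts - 1 by rewrite subr_gt0.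
  have [x [/andP[_ x1] _] hx] := sup_adherent e1 hs.
  by move: hx; rewrite -/ts opprB addrC subrK ltNge x1.
have c1 : forall s, 0 <= s < ts -> psd (Hf s).
  move=> s /andP[s0 sts].
  have e1 : 0 < ts - s by rewrite subr_gt0.
  have [x [_ hx] lt] := sup_adherent e1 hs.
  apply: hx; rewrite s0 /=; move: lt; rewrite -/ts opprB addrC subrK.
  exact: ltW.
have c2 : psd (Hf ts).
  apply: closed_step; first by rewrite ts0 ts1.
  move=> e e0; have [x [/andP[x0 x1] hx] lt] := sup_adherent e0 hs.
  exists x; last by apply: hx; rewrite x0 lexx.
  split; first by rewrite x0 x1.
  have := ub x (conj (introT andP (conj x0 x1)) hx).
  rewrite -/ts in lt => le; rewrite distrC ger0_norm ?subr_ge0 //; lra.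
have c3 : ts = 1.
  apply/eqP; rewrite eq_le ts1 /= leNgt; apply/negP => lt1.
  have [h h0' hh'] := open_step (introT andP (conj ts0 lt1)) c2.
  set t' := Num.min 1 (ts + h).
  have t'1 : t' <= 1 by rewrite /t' ge_min lexx.
  have tst' : ts < t' by rewrite /t' lt_min lt1 ltrDl h0'.
  have : A t'.
    split; first by rewrite t'1 andbT; apply: le_trans ts0 (ltW tst').
    move=> s /andP[s0 st']; have [lts|] := ltP s ts; first by apply: c1; rewrite s0 lts.
    move=> tss; apply: hh'; first by rewrite s0 (le_trans st' t'1).
    rewrite ger0_norm ?subr_ge0 // lerBlDl.
    by apply: le_trans st' _; rewrite /t' ge_min lexx orbT.
  by move/ub; rewrite leNgt tst'.
move=> /andP[t0 t1]; have [lt|] := ltP t ts; first by apply: c1; rewrite t0 lt.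
by move=> tts; have -> : t = ts by apply/eqP; rewrite eq_le tts c3 t1.
Qed.
End Path.

Section Class.
Variable R : realType.
Local Notation C := (R[i]).
Local Open Scope complex_scope.

Definition I01 (t : R) := 0 <= t <= 1.

Definition cl (f : R -> C) := exists M L : R, forall s t, I01 s -> I01 t ->
  nc (f t) <= M /\ nc (f s - f t) <= L * `|s - t|.

Lemma cl_ext f g : (forall t, f t = g t) -> cl f -> cl g.
Proof.
move=> e [M [L h]]; exists M, L => s t hs ht.
by rewrite -!e; exact: h.
Qed.

Lemma cl_const c : cl (fun _ => c).
Proof.
exists (nc c), 0 => s t _ _; split => //.
by rewrite subrr nc0 mul0r.
Qed.

Lemma cl_id : cl (fun t => t%:C).
Proof.
exists 1, 1 => s t _ /andP[t0 t1]; rewrite ncR mul1r -rmorphB ncR.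
by rewrite ger0_norm.
Qed.

Lemma cl_add f g : cl f -> cl g -> cl (fun t => f t + g t).
Proof.
move=> [M1 [L1 h1]] [M2 [L2 h2]]; exists (M1 + M2), (L1 + L2) => s t hs ht.
have [a1 b1] := h1 s t hs ht; have [a2 b2] := h2 s t hs ht.
split; first by apply: le_trans (ncD _ _) _; lra.
have -> : f s + g s - (f t + g t) = (f s - f t) + (g s - g t) by ring.
by apply: le_trans (ncD _ _) _; lra.
Qed.

Lemma cl_opp f : cl f -> cl (fun t => - f t).
Proof.
move=> [M [L h]]; exists M, L => s t hs ht.
by rewrite -opprD !ncN; exact: h.
Qed.

Lemma cl_sub f g : cl f -> cl g -> cl (fun t => f t - g t).
Proof. by move=> hf hg; apply: cl_add hf (cl_opp hg). Qed.

Lemma cl_mul f g : cl f -> cl g -> cl (fun t => f t * g t).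
Proof.
move=> [M1 [L1 h1]] [M2 [L2 h2]]; exists (M1 * M2), (M1 * L2 + L1 * M2) => s t hs ht.
have [a1 b1] := h1 s t hs ht; have [a2 b2] := h2 s t hs ht.
have [a1' _] := h1 t s ht hs.
split; first by rewrite ncM; apply: ler_pM => //; exact: nc_ge0.
have -> : f s * g s - f t * g t = f s * (g s - g t) + (f s - f t) * g t by ring.
apply: le_trans (ncD _ _) _; rewrite [in X in _ <= X]mulrDl; apply: lerD; rewrite ncM.
  by rewrite -mulrA; apply: ler_pM => //; exact: nc_ge0.
by rewrite mulrAC; apply: ler_pM => //; exact: nc_ge0.
Qed.

Lemma cl_conj f : cl f -> cl (fun t => Num.conj (f t)).
Proof.
move=> [M [L h]]; exists M, L => s t hs ht.
by rewrite -rmorphB !ncJ; exact: h.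
Qed.

Lemma cl_sum_seq (I : Type) (r : seq I) (F : I -> R -> C) :
  (forall i, cl (F i)) -> cl (fun t => \sum_(i <- r) F i t).
Proof.
move=> hF; elim: r => [|x r ih].
  by apply: cl_ext (cl_const 0) => t; rewrite big_nil.
by apply: cl_ext (cl_add (hF x) ih) => t; rewrite big_cons.
Qed.

Lemma cl_prod_seq (I : Type) (r : seq I) (F : I -> R -> C) :
  (forall i, cl (F i)) -> cl (fun t => \prod_(i <- r) F i t).
Proof.
move=> hF; elim: r => [|x r ih].
  by apply: cl_ext (cl_const 1) => t; rewrite big_nil.
by apply: cl_ext (cl_mul (hF x) ih) => t; rewrite big_cons.
Qed.

Lemma cl_sum (I : finType) (F : I -> R -> C) :
  (forall i, cl (F i)) -> cl (fun t => \sum_i F i t).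
Proof. exact: cl_sum_seq. Qed.

Lemma cl_prod (I : finType) (F : I -> R -> C) :
  (forall i, cl (F i)) -> cl (fun t => \prod_i F i t).
Proof. exact: cl_prod_seq. Qed.

Definition mcl m p (A : R -> 'M[C]_(m, p)) := forall i j, cl (fun t => A t i j).

Lemma mcl_const m p (A : 'M[C]_(m, p)) : mcl (fun _ => A).
Proof. by move=> i j; exact: cl_const. Qed.

Lemma mcl_add m p (A B : R -> 'M[C]_(m, p)) : mcl A -> mcl B -> mcl (fun t => A t + B t).
Proof. by move=> hA hB i j; apply: cl_ext (cl_add (hA i j) (hB i j)) => t; rewrite mxE. Qed.

Lemma mcl_opp m p (A : R -> 'M[C]_(m, p)) : mcl A -> mcl (fun t => - A t).
Proof. by move=> hA i j; apply: cl_ext (cl_opp (hA i j)) => t; rewrite mxE. Qed.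

Lemma mcl_sub m p (A B : R -> 'M[C]_(m, p)) : mcl A -> mcl B -> mcl (fun t => A t - B t).
Proof. by move=> hA hB; apply: mcl_add hA (mcl_opp hB). Qed.

Lemma mcl_scale m p (a : R -> C) (A : R -> 'M[C]_(m, p)) : cl a -> mcl A ->
  mcl (fun t => a t *: A t).
Proof. by move=> ha hA i j; apply: cl_ext (cl_mul ha (hA i j)) => t; rewrite mxE. Qed.

Lemma mcl_mul m p q (A : R -> 'M[C]_(m, p)) (B : R -> 'M[C]_(p, q)) :
  mcl A -> mcl B -> mcl (fun t => A t *m B t).
Proof.
move=> hA hB i j.
apply: cl_ext (cl_sum (fun k => cl_mul (hA i k) (hB k j))) => t.
by rewrite mxE.
Qed.

Lemma mcl_tr m p (A : R -> 'M[C]_(m, p)) : mcl A -> mcl (fun t => (A t)^T).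
Proof. by move=> hA i j; apply: cl_ext (hA j i) => t; rewrite mxE. Qed.

Lemma mcl_cconj m p (A : R -> 'M[C]_(m, p)) : mcl A -> mcl (fun t => cconj (A t)).
Proof. by move=> hA i j; apply: cl_ext (cl_conj (hA i j)) => t; rewrite mxE. Qed.

Lemma mcl_adj m p (A : R -> 'M[C]_(m, p)) : mcl A -> mcl (fun t => adj (A t)).
Proof. by move=> hA; exact: mcl_tr (mcl_cconj hA). Qed.

Lemma mcl_cast m p m' p' (e : (m = m') * (p = p')) (A : R -> 'M[C]_(m, p)) :
  mcl A -> mcl (fun t => castmx e (A t)).
Proof. by move=> hA i j; apply: cl_ext (hA _ _) => t; rewrite castmxE. Qed.

Lemma mcl_kron m p m' p' (A : R -> 'M[C]_(m, p)) (B : R -> 'M[C]_(m', p')) :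
  mcl A -> mcl B -> mcl (fun t => kron (A t) (B t)).
Proof.
by move=> hA hB i j; apply: cl_ext (cl_mul (hA _ _) (hB _ _)) => t; rewrite mxE.
Qed.

Lemma mcl_block m1 m2 p1 p2 (A : R -> 'M[C]_(m1, p1)) (B : R -> 'M[C]_(m1, p2))
  (D : R -> 'M[C]_(m2, p1)) (E : R -> 'M[C]_(m2, p2)) :
  mcl A -> mcl B -> mcl D -> mcl E -> mcl (fun t => block_mx (A t) (B t) (D t) (E t)).
Proof.
move=> hA hB hD hE i j.
case: (splitP i) => [i' ei|i' ei].
  have -> : i = lshift m2 i' by apply: val_inj; exact: ei.
  case: (splitP j) => [j' ej|j' ej].
    have -> : j = lshift p2 j' by apply: val_inj; exact: ej.
    by apply: cl_ext (hA i' j') => t; rewrite block_mxEul.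
  have -> : j = rshift p1 j' by apply: val_inj; exact: ej.
  by apply: cl_ext (hB i' j') => t; rewrite block_mxEur.
have -> : i = rshift m1 i' by apply: val_inj; exact: ei.
case: (splitP j) => [j' ej|j' ej].
  have -> : j = lshift p2 j' by apply: val_inj; exact: ej.
  by apply: cl_ext (hD i' j') => t; rewrite block_mxEdl.
have -> : j = rshift p1 j' by apply: val_inj; exact: ej.
by apply: cl_ext (hE i' j') => t; rewrite block_mxEdr.
Qed.

Lemma mcl_vecc d (A : R -> 'M[C]_d) : mcl A -> mcl (fun t => vecc (A t)).
Proof. by move=> hA i j; apply: cl_ext (hA _ _) => t; rewrite mxE. Qed.

Lemma cl_tr d (A : R -> 'M[C]_d) : mcl A -> cl (fun t => \tr (A t)).
Proof. by move=> hA; apply: cl_sum => i; exact: hA. Qed.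

Lemma cl_det d (A : R -> 'M[C]_d) : mcl A -> cl (fun t => \det (A t)).
Proof.
move=> hA; apply: cl_sum => s; apply: cl_mul; first exact: cl_const.
by apply: cl_prod => i; exact: hA.
Qed.

Lemma mcl_m2 (a b c e : R -> C) : cl a -> cl b -> cl c -> cl e ->
  mcl (fun t => \matrix_(i < 2, j < 2)
             nth 0 (nth [::] [:: [:: a t; b t]; [:: c t; e t]] i) j).
Proof.
move=> ha hb hc he [[|[|i]] hi] [[|[|j]] hj] //;
  [apply: cl_ext ha|apply: cl_ext hb|apply: cl_ext hc|apply: cl_ext he] => t;
  by rewrite mxE.
Qed.

End Class.

Section HC.
Variable R : realType.
Local Notation C := (R[i]).
Variable d : nat.
Variables X Y : R -> 'M[C]_d.
Hypotheses (hX : mcl X) (hY : mcl Y).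

Lemma mcl_H1 : mcl (fun t => H1 (X t) (Y t)).
Proof.
apply: mcl_cast; apply: mcl_kron; last exact: mcl_const.
apply: mcl_m2; apply: cl_tr; apply: mcl_mul => //; exact: mcl_adj.
Qed.

Lemma mcl_H2 : mcl (fun t => H2 (X t) (Y t)).
Proof.
apply: mcl_cast; apply: mcl_kron; last exact: mcl_const.
by apply: mcl_block; apply: mcl_mul => //; exact: mcl_adj.
Qed.

Lemma mcl_H3 : mcl (fun t => H3 (X t) (Y t)).
Proof.
by apply: mcl_block; apply: mcl_kron; (try exact: mcl_const);
  apply: mcl_mul; (try exact: mcl_cconj); exact: mcl_tr.
Qed.

Lemma mcl_H4 : mcl (fun t => H4 (X t) (Y t)).
Proof.
by apply: mcl_block; apply: mcl_mul;
  (try (apply: mcl_cconj; exact: mcl_vecc)); apply: mcl_tr; exact: mcl_vecc.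
Qed.

Lemma mcl_Hmat : mcl (fun t => Hmat (X t) (Y t)).
Proof.
apply: mcl_add; first apply: mcl_sub.
- exact: mcl_H1.
- apply: mcl_scale; first exact: cl_const.
  apply: mcl_add; [exact: mcl_H2|exact: mcl_H3].
- apply: mcl_scale; first exact: cl_const.
  exact: mcl_H4.
Qed.

End HC.

Section Herm.
Variable R : realType.
Local Notation C := (R[i]).

Lemma dgN m p (A : 'M[C]_(m, p)) : adj (- A) = - adj A.
Proof. by apply/matrixP => i j; rewrite !mxE rmorphN. Qed.

Lemma dg_cast m p m' p' (e1 : m = m') (e2 : p = p') (A : 'M[C]_(m, p)) :
  adj (castmx (e1, e2) A) = castmx (e2, e1) (adj A).
Proof. by apply/matrixP => i j; rewrite dgE !castmxE dgE. Qed.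

Lemma dg_kron m p m' p' (A : 'M[C]_(m, p)) (B : 'M[C]_(m', p')) :
  adj (kron A B) = kron (adj A) (adj B).
Proof. by apply/matrixP => i j; rewrite dgE !mxE rmorphM. Qed.

Lemma dg_block m1 m2 p1 p2 (A : 'M[C]_(m1, p1)) (B : 'M[C]_(m1, p2))
  (D : 'M[C]_(m2, p1)) (E : 'M[C]_(m2, p2)) :
  adj (block_mx A B D E) = block_mx (adj A) (adj D) (adj B) (adj E).
Proof. by rewrite /adj /cconj map_block_mx tr_block_mx. Qed.

Lemma dg1 m : adj (1%:M : 'M[C]_m) = 1%:M.
Proof. by apply/matrixP => i j; rewrite dgE !mxE rmorph_nat eq_sym. Qed.

Lemma dg_cconj m p (A : 'M[C]_(m, p)) : adj (cconj A) = A^T.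
Proof. by apply/matrixP => i j; rewrite dgE !mxE conjCK. Qed.

Lemma dg_tr m p (A : 'M[C]_(m, p)) : adj (A^T) = cconj A.
Proof. by apply/matrixP => i j; rewrite dgE !mxE. Qed.

Lemma conj_tr m (A : 'M[C]_m) : Num.conj (\tr A) = \tr (adj A).
Proof. by rewrite /mxtrace rmorph_sum; apply: eq_bigr => i _; rewrite dgE. Qed.

Lemma conj_inv_nat (k : nat) : Num.conj ((k%:R : C)^-1) = (k%:R)^-1.
Proof. by rewrite fmorphV rmorph_nat. Qed.

Lemma herm_H1 d (X Y : 'M[C]_d) : adj (H1 X Y) = H1 X Y.
Proof.
rewrite /H1 dg_cast dg_kron dg1; congr (castmx _ (kron _ _)).
apply/matrixP => i j; rewrite dgE !mxE.
case: i => [[|[|i]] hi]; case: j => [[|[|j]] hj] //=;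
  by rewrite /fnorm2 conj_tr !dgM dgK.
Qed.

Lemma herm_H2 d (X Y : 'M[C]_d) : adj (H2 X Y) = H2 X Y.
Proof. by rewrite /H2 dg_cast dg_kron dg1 dg_block !dgM !dgK. Qed.

Lemma herm_H3 d (X Y : 'M[C]_d) : adj (H3 X Y) = H3 X Y.
Proof. by rewrite /H3 dg_block !dg_kron !dg1 !dgM !dg_cconj !dg_tr. Qed.

Lemma herm_H4 d (X Y : 'M[C]_d) : adj (H4 X Y) = H4 X Y.
Proof. by rewrite /H4 dg_block !dgM !dg_cconj !dg_tr. Qed.

Lemma herm_Hmat d (X Y : 'M[C]_d) : herm (Hmat X Y).
Proof.
rewrite /herm /Hmat (dgD (H1 X Y - _)) (dgZ (4^-1)) (dgD (H1 X Y)) dgN.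
rewrite (dgZ (2^-1)) (dgD (H2 X Y)) herm_H1 herm_H2 herm_H3 herm_H4.
by rewrite !conj_inv_nat.
Qed.

End Herm.

Section Base.
Variable R : realType.
Local Notation C := (R[i]).

Definition DG n (A : 'M[C]_n) (lo hi : C) :=
  forall i j, (i != j -> A i j = 0) /\ (lo <= A i i <= hi).

Lemma DG1 n : DG (1%:M : 'M[C]_n) 1 1.
Proof. by move=> i j; rewrite !mxE eqxx lexx; split => // /negbTE ->. Qed.

Lemma DG_cast n n' (e : n = n') (A : 'M[C]_n) lo hi : DG A lo hi -> DG (castmx (e, e) A) lo hi.
Proof.
move=> h i j; rewrite !castmxE; have [h1 h2] := h (cast_ord (esym e) i) (cast_ord (esym e) j).
by split.
Qed.

Lemma ord_divmod_inj m p (i j : 'I_(m * p)) :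
  ord_div i = ord_div j -> ord_mod i = ord_mod j -> i = j.
Proof.
move=> /(congr1 val) /= h1 /(congr1 val) /= h2; apply: val_inj => /=.
by rewrite (divn_eq i p) (divn_eq j p) h1 h2.
Qed.

Lemma DG_kron m p (A : 'M[C]_m) (B : 'M[C]_p) lo1 hi1 lo2 hi2 :
  0 <= lo1 -> 0 <= lo2 -> DG A lo1 hi1 -> DG B lo2 hi2 ->
  DG (kron A B) (lo1 * lo2) (hi1 * hi2).
Proof.
move=> l1 l2 hA hB i j; rewrite !mxE; split.
  move=> ij; have [e1|n1] := eqVneq (ord_div i) (ord_div j).
    have [e2|n2] := eqVneq (ord_mod i) (ord_mod j).
      by move: ij; rewrite (ord_divmod_inj e1 e2) eqxx.
    by rewrite (proj1 (hB _ _) n2) mulr0.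
  by rewrite (proj1 (hA _ _) n1) mul0r.
have [_ /andP[a1 a2]] := hA (ord_div i) (ord_div i).
have [_ /andP[b1 b2]] := hB (ord_mod i) (ord_mod i).
apply/andP; split; first by apply: ler_pM.
by apply: ler_pM => //; [exact: le_trans a1| exact: le_trans b1].
Qed.

Lemma DG_block m p (A : 'M[C]_m) (D : 'M[C]_p) lo hi :
  DG A lo hi -> DG D lo hi -> DG (block_mx A 0 0 D) lo hi.
Proof.
move=> hA hD i j.
case: (splitP i) => [i' ei|i' ei].
  have -> : i = lshift p i' by apply: val_inj; exact: ei.
  case: (splitP j) => [j' ej|j' ej].
    have -> : j = lshift p j' by apply: val_inj; exact: ej.
    rewrite !block_mxEul; have [h1 h2] := hA i' j'; by split.
  have -> : j = rshift m j' by apply: val_inj; exact: ej.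
  by rewrite block_mxEur block_mxEul mxE; split => //; have [] := hA i' i'.
have -> : i = rshift m i' by apply: val_inj; exact: ei.
case: (splitP j) => [j' ej|j' ej].
  have -> : j = lshift p j' by apply: val_inj; exact: ej.
  by rewrite block_mxEdl block_mxEdr mxE; split => //; have [] := hD i' i'.
have -> : j = rshift m j' by apply: val_inj; exact: ej.
rewrite !block_mxEdr; have [h1 h2] := hD i' j'.
split => // ij; apply: h1; by apply: contra ij => /eqP ->.
Qed.

Lemma qf_DG n (A : 'M[C]_n) v : (forall i j, i != j -> A i j = 0) ->
  (forall i, 0 <= A i i) -> 0 <= qf A v.
Proof.
move=> h0 hd; rewrite /qf /bf -mulmxA mxE; apply: sumr_ge0 => i _.
rewrite [(A *m v) i 0]mxE (bigD1 i) //= big1 ?addr0; last first.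
  by move=> k ki; rewrite h0 ?mul0r // eq_sym.
rewrite dgE mulrCA; apply: mulr_ge0; first exact: hd.
by rewrite mulrC nc_sqr ler0c exprn_ge0 ?nc_ge0.
Qed.

Lemma qf_gram p n (G : 'M[C]_(p, n)) v : 0 <= qf (adj G *m G) v.
Proof.
rewrite /qf /bf mulmxA -dgM -mulmxA mxE; apply: sumr_ge0 => k _.
by rewrite dgE mulrC nc_sqr ler0c exprn_ge0 ?nc_ge0.
Qed.

End Base.

Section BaseP.
Variable R : realType.
Local Notation C := (R[i]).

Lemma qfD n (A B : 'M[C]_n) v : qf (A + B) v = qf A v + qf B v.
Proof. by rewrite /qf /bf mulmxDr mulmxDl mxE. Qed.

Lemma qfZ n (c : C) (A : 'M[C]_n) v : qf (c *: A) v = c * qf A v.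
Proof. by rewrite /qf /bf -scalemxAr -scalemxAl mxE. Qed.

Lemma H4_gram d (X Y : 'M[C]_d) :
  H4 X Y = adj ((col_mx (vecc X) (vecc Y))^T) *m (col_mx (vecc X) (vecc Y))^T.
Proof.
by rewrite dg_tr /cconj map_col_mx tr_col_mx mul_col_row.
Qed.

Lemma kron0 m p m' p' (A : 'M[C]_(m, p)) : kron A (0 : 'M[C]_(m', p')) = 0.
Proof. by apply/matrixP => i j; rewrite !mxE mulr0. Qed.

Variable d : nat.
Hypothesis hd : (2 <= d)%N.

Let d0 : (0 < d)%N. Proof. exact: leq_trans hd. Qed.
Definition i0 : 'I_d := Ordinal d0.
Definition E0 : 'M[C]_d := delta_mx i0 i0.
Definition F0 : 'M[C]_d := 1%:M - E0.

Lemma cE : cconj E0 = E0.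
Proof. by apply/matrixP => i j; rewrite !mxE rmorph_nat. Qed.
Lemma tE : E0^T = E0.
Proof. by rewrite /E0 trmx_delta. Qed.
Lemma cF : cconj F0 = F0.
Proof. by apply/matrixP => i j; rewrite !mxE rmorphB !rmorph_nat. Qed.
Lemma tF : F0^T = F0.
Proof. by rewrite /F0 linearB /= trmx1 tE. Qed.
Lemma aE : adj E0 = E0. Proof. by rewrite /adj cE tE. Qed.
Lemma aF : adj F0 = F0. Proof. by rewrite /adj cF tF. Qed.
Lemma EE : E0 *m E0 = E0. Proof. by rewrite /E0 mul_delta_mx. Qed.
Lemma EF : E0 *m F0 = 0. Proof. by rewrite /F0 mulmxBr mulmx1 EE subrr. Qed.
Lemma FE : F0 *m E0 = 0. Proof. by rewrite /F0 mulmxBl mul1mx EE subrr. Qed.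
Lemma FF : F0 *m F0 = F0. Proof. by rewrite {1}/F0 mulmxBl mul1mx EF subr0. Qed.

Lemma trE : \tr E0 = 1.
Proof.
rewrite /mxtrace (bigD1 i0) //= big1 ?addr0; first by rewrite mxE eqxx.
by move=> i /negbTE ni; rewrite mxE ni.
Qed.

Lemma trF : \tr F0 = d%:R - 1.
Proof. by rewrite /F0 linearB /= mxtrace1 trE. Qed.

Lemma DGE : DG E0 0 1.
Proof.
move=> i j; rewrite !mxE; split.
  move=> ij; case: eqP => [ei|_]; case: eqP => [ej|_] //=.
  by move: ij; rewrite ei ej eqxx.
by case: (i == i0) => /=; rewrite ?lexx ?ler01.
Qed.

Lemma DGF : DG F0 0 1.
Proof.
move=> i j; rewrite !mxE; split.
  move=> ij; rewrite (negbTE ij) /= sub0r.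
  case: eqP => [ei|_]; case: eqP => [ej|_] /=; rewrite ?oppr0 //.
  by move: ij; rewrite ei ej eqxx.
rewrite eqxx; case: (i == i0) => /=; rewrite ?subrr ?subr0 ?lexx ?ler01 //.
Qed.

Lemma DG_kron1 m p (A : 'M[C]_m) lo hi : 0 <= lo -> DG A lo hi ->
  DG (kron A (1%:M : 'M[C]_p)) lo hi.
Proof. by move=> l0 hA; have := DG_kron l0 ler01 hA (@DG1 R p); rewrite !mulr1. Qed.

Lemma DG_1kron m p (A : 'M[C]_p) lo hi : 0 <= lo -> DG A lo hi ->
  DG (kron (1%:M : 'M[C]_m) A) lo hi.
Proof. by move=> l0 hA; have := DG_kron ler01 l0 (@DG1 R m) hA; rewrite !mul1r. Qed.

Lemma DG_H1 : DG (H1 E0 F0) 1 (d%:R - 1).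
Proof.
apply: DG_cast; apply: DG_kron1; rewrite ?ler01 //.
have d1 : 1 <= d%:R - 1 :> C.
  by rewrite lerBrDr (_ : 1 + 1 = 2%:R) // ler_nat.
move=> [[|[|i]] hi] [[|[|j]] hj] //; rewrite !mxE /= /fnorm2 ?aE ?aF ?EE ?EF ?FE ?FF
  ?trE ?trF ?mxtrace0; split => //; rewrite ?lexx ?d1 //.
Qed.

Lemma DG_H2 : DG (H2 E0 F0) 0 1.
Proof.
rewrite /H2 aE aF EE EF FE FF; apply: DG_cast; apply: DG_kron1 (lexx 0) _.
exact: DG_block DGE DGF.
Qed.

Lemma DG_H3 : DG (H3 E0 F0) 0 1.
Proof.
rewrite /H3 cE cF tE tF EE EF FE FF !kron0.
by apply: DG_block; apply: DG_1kron (lexx 0) _; [exact: DGE|exact: DGF].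
Qed.

Lemma base_psd : psd (Hmat E0 F0).
Proof.
move=> v; change (0 <= qf (Hmat E0 F0) v).
rewrite /Hmat qfD qfZ; apply: addr_ge0; last first.
  by apply: mulr_ge0; [rewrite invr_ge0 ler0n | rewrite H4_gram; exact: qf_gram].
have De : forall n (A B D : 'M[C]_n) (c : C) i j,
    (A - c *: (B + D)) i j = A i j - c * (B i j + D i j) by move=> *; rewrite !mxE.
apply: qf_DG => [i j ij|i]; rewrite De.
  rewrite (proj1 (DG_H1 i j) ij) (proj1 (DG_H2 i j) ij) (proj1 (DG_H3 i j) ij).
  by rewrite addr0 mulr0 subr0.
have [_ /andP[a1 _]] := DG_H1 i i; have [_ /andP[_ b1]] := DG_H2 i i.
have [_ /andP[_ c1]] := DG_H3 i i.
rewrite subr_ge0; apply: le_trans a1.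
have e2 : (2%:R^-1 : C) * (1 + 1) = 1.
  by rewrite (_ : 1 + 1 = 2%:R) // mulVf // pnatr_eq0.
apply: (@le_trans _ _ (2%:R^-1 * (1 + 1))); last by rewrite e2.
by apply: ler_wpM2l; [rewrite invr_ge0 ler0n | exact: lerD].
Qed.

End BaseP.

Section Roots.
Variable R : realType.
Local Notation C := (R[i]).

Definition Wm d (A0 A1 : 'M[C]_d) (z : C) := (1 - z) *: A0 + z *: A1.
Definition Mp d (A0 A1 : 'M[C]_d) : 'M[{poly C}]_d :=
  \matrix_(i, j) ((A0 i j)%:P + 'X * (A1 i j - A0 i j)%:P).

Lemma Mp_eval d (A0 A1 : 'M[C]_d) z i j : (Mp A0 A1 i j).[z] = Wm A0 A1 z i j.
Proof. rewrite !mxE hornerD hornerM hornerX !hornerC; ring. Qed.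

Lemma Mp_det d (A0 A1 B0 B1 : 'M[C]_d) z :
  (\det (Mp A0 A1 + Mp B0 B1)).[z] = \det (Wm A0 A1 z + Wm B0 B1 z).
Proof.
rewrite -horner_evalE -det_map_mx; congr (\det _).
apply/matrixP => i j; rewrite !mxE /= horner_evalE !(hornerD, hornerM, hornerX, hornerC); ring.
Qed.

Definition zs (s t : R) : C := Complex t (s * t * (1 - t)).

Variable p : {poly C}.
Hypothesis p0 : p.[0] != 0.

Lemma exists_s : exists s : R, forall t, 0 <= t < 1 -> p.[zs s t] != 0.
Proof.
apply: NNPP => H.
have H' : forall k : nat, exists t, (0 <= t < 1) && (p.[zs k%:R t] == 0).
  move=> k; apply: NNPP => Hk; apply: H; exists k%:R => t ht.
  by apply/negP => /eqP pz; apply: Hk; exists t; rewrite ht pz eqxx.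
pose f k := proj1_sig (constructive_indefinite_description _ (H' k)).
have hf : forall k, (0 <= f k < 1) && (p.[zs k%:R (f k)] == 0).
  by move=> k; exact: (proj2_sig (constructive_indefinite_description _ (H' k))).
have pn0 : p != 0 by apply: contraNneq p0 => ->; rewrite horner0.
pose rs := [seq zs k%:R (f k) | k <- iota 0 (size p)].
have hall : all (root p) rs.
  by apply/allP => x /mapP[k _ ->]; rewrite /root; have /andP[_ ->] := hf k.
suff hu : uniq rs by have := max_poly_roots pn0 hall hu; rewrite size_map size_iota ltnn.
rewrite map_inj_in_uniq ?iota_uniq // => k j _ _ [] ekj.
have /andP[/andP[t0 t1] pz] := hf j.
have tk0 : f j != 0.
  apply: contraTneq pz => ->; rewrite /zs !mulr0 !mul0r.
  by rewrite (_ : Complex 0 0 = 0) //.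
rewrite ekj => /eqP; rewrite -subr_eq0 -!mulrBl !mulf_eq0 subr_eq0 eqr_nat.
rewrite (negbTE tk0) subr_eq0 orbF => /orP[/eqP //|/eqP e1].
by move: t1; rewrite -e1 ltxx.
Qed.

End Roots.

Section Final.
Variable R : realType.
Local Notation C := (R[i]).

Lemma generic_minor d (i0 i1 : 'I_d) (X Y : 'M[C]_d) :
  \det (X + Y) * (X i0 i0 * Y i1 i1 - X i1 i1 * Y i0 i0) != 0 -> generic X Y.
Proof.
rewrite mulf_eq0 negb_or => /andP[dn mn]; split; last first.
  by exists 1, 1; rewrite !scale1r.
move=> a b /matrixP h; have h0 := h i0 i0; have h1 := h i1 i1.
rewrite !mxE in h0 h1.
have ea : a * (X i0 i0 * Y i1 i1 - X i1 i1 * Y i0 i0) = 0.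
  have -> : a * (X i0 i0 * Y i1 i1 - X i1 i1 * Y i0 i0) =
    Y i1 i1 * (a * X i0 i0 + b * Y i0 i0) - Y i0 i0 * (a * X i1 i1 + b * Y i1 i1) by ring.
  by rewrite h0 h1 !mulr0 subrr.
have eb : b * (X i0 i0 * Y i1 i1 - X i1 i1 * Y i0 i0) = 0.
  have -> : b * (X i0 i0 * Y i1 i1 - X i1 i1 * Y i0 i0) =
    X i0 i0 * (a * X i1 i1 + b * Y i1 i1) - X i1 i1 * (a * X i0 i0 + b * Y i0 i0) by ring.
  by rewrite h0 h1 !mulr0 subrr.
by split; apply/eqP; [move: ea|move: eb] => /eqP; rewrite mulf_eq0 (negbTE mn) orbF.
Qed.

Lemma Wm0 d (A0 A1 : 'M[C]_d) : Wm A0 A1 0 = A0.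
Proof. by rewrite /Wm subr0 scale1r scale0r addr0. Qed.

Lemma Wm1 d (A0 A1 : 'M[C]_d) : Wm A0 A1 1 = A1.
Proof. by rewrite /Wm subrr scale0r scale1r add0r. Qed.

Lemma zs0 (s : R) : zs s 0 = 0.
Proof. by rewrite /zs mulr0 mul0r. Qed.

Lemma zs1 (s : R) : zs s 1 = 1.
Proof. by rewrite /zs subrr mulr0. Qed.

Lemma cl_zs (s : R) : cl (fun t => zs s t).
Proof.
have e : forall t, s%:C%C * t%:C%C * (1 - t%:C%C) = (s * t * (1 - t))%:C%C.
  by move=> t; rewrite rmorphM rmorphM rmorphB rmorph1.
apply: (cl_ext (f := fun t => t%:C%C + 'i%C * (s%:C%C * t%:C%C * (1 - t%:C%C)))).
  by move=> t; rewrite e [RHS]complexE.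
apply: cl_add; first exact: cl_id.
apply: cl_mul; first exact: cl_const.
apply: cl_mul; first by apply: cl_mul; [exact: cl_const|exact: cl_id].
by apply: cl_sub; [exact: cl_const|exact: cl_id].
Qed.

Lemma mcl_Wm d (s : R) (A0 A1 : 'M[C]_d) : mcl (fun t => Wm A0 A1 (zs s t)).
Proof.
apply: mcl_add; apply: mcl_scale; try exact: mcl_const; last exact: cl_zs.
by apply: cl_sub; [exact: cl_const|exact: cl_zs].
Qed.

Lemma mcl_unif n (A : R -> 'M[C]_n) : mcl A -> exists L, 0 <= L /\
  forall s t i j, 0 <= s <= 1 -> 0 <= t <= 1 -> nc (A s i j - A t i j) <= L * `|s - t|.
Proof.
move=> hA.
have : forall ij : 'I_n * 'I_n, exists L : R, forall s t, I01 s -> I01 t ->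
   nc (A s ij.1 ij.2 - A t ij.1 ij.2) <= L * `|s - t|.
  by move=> [i j]; have [M [L h]] := hA i j; exists L => s t hs ht; have [] := h s t hs ht.
case/fin_all_exists => Lf hL.
exists (\sum_ij `|Lf ij|); split; first by apply: sumr_ge0 => ij _.
move=> s t i j hs ht; apply: le_trans (hL (i, j) s t hs ht) _.
apply: ler_wpM2r => //; apply: le_trans (ler_norm _) _.
by apply: (@nc_le_sum _ _ (fun ij => `|Lf ij|) (i, j)) => k.
Qed.

End Final.

Unset Implicit Arguments.

Theorem proposition6p2 (R : realType) (d : nat) (hd : (3 <= d)%N) :
  (forall X Y : 'M[R[i]]_d, generic X Y -> \det (Hmat X Y) != 0) ->
  forall X Y : 'M[R[i]]_d, psd (Hmat X Y).
Proof.
move=> hyp X Y.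
have hd2 : (2 <= d)%N by exact: ltnW.
have d1 : (1 < d)%N by exact: hd2.
pose j0 : 'I_d := i0 hd2.
pose j1 : 'I_d := Ordinal d1.
pose E := E0 R hd2; pose F := F0 R hd2.
pose pX := Mp E X; pose pY := Mp F Y.
pose p := \det (pX + pY) * (pX j0 j0 * pY j1 j1 - pX j1 j1 * pY j0 j0).
have pz : forall z, p.[z] = \det (Wm E X z + Wm F Y z) *
   (Wm E X z j0 j0 * Wm F Y z j1 j1 - Wm E X z j1 j1 * Wm F Y z j0 j0).
  by move=> z; rewrite /p hornerM Mp_det hornerD hornerN !hornerM !Mp_eval.
have p0 : p.[0] != 0.
  rewrite pz !Wm0 /F /F0 addrC subrK det1 mul1r !mxE /=.
  by rewrite subrr subr0 mul0r mulr1 subr0 oner_eq0.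
have [s hs] := exists_s p0.
pose Hf t := Hmat (Wm E X (zs s t)) (Wm F Y (zs s t)).
have [L [L0 hL]] := mcl_unif (mcl_Hmat (mcl_Wm s E X) (mcl_Wm s F Y)).
have hh : forall t, herm (Hf t) by move=> t; exact: herm_Hmat.
have h0 : psd (Hf 0) by rewrite /Hf zs0 !Wm0; exact: base_psd.
have hdet : forall t, 0 <= t < 1 -> \det (Hf t) != 0.
  move=> t ht; apply: hyp; apply: (generic_minor (i0 := j0) (i1 := j1)).
  by rewrite -pz; exact: hs.
have := path_psd hh L0 hL h0 hdet (t := 1).
by rewrite /Hf zs1 !Wm1 lexx ler01 => /(_ isT).
Qed.
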